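(* Let $M=(S,\mathrm{Act},P)$ be an MDP, $T\subseteq S$, $\mathrm{rew}\colon S\to\mathbb{R}_{\ge0}$, $\mathrm{opt}\in\{\min,\max\}$. Let $(x,r)\in[0,\infty]^S\times\mathbb{N}_\infty^S$ satisfy: (1) $\tilde D^{\overline{\mathrm{opt}}}(r)\le r$; (2) $x\le E^{\mathrm{opt}}(x)$; (3) for all $s\in S$, $x(s)=\infty$ implies $r(s)<\infty$ (inequalities pointwise). Then $\mathbb{E}^{\mathrm{opt}}_s(\Diamond T)\ge x(s)$ for all $s\in S$.
   Context: An MDP is a tuple $M=(S,\mathrm{Act},P)$ with $S$ finite, $\mathrm{Act}$ finite, $P\colon S\times\mathrm{Act}\times S\to[0,1]$ with $\sum_{s'}P(s,a,s')\in\{0,1\}$; $\mathrm{Act}(s)=\{a\mid\sum_{s'}P(s,a,s')=1\}$ is nonempty for all $s$; $\mathrm{Post}(s,a)=\{s'\mid P(s,a,s')>0\}$. A strategy is $\sigma\colon S\to\mathrm{Act}$ with $\sigma(s)\in\mathrm{Act}(s)$, inducing a Markov chain with transitions $P(s,\sigma(s),\cdot)$. $\overline{\min}=\max$, $\overline{\max}=\min$. For an infinite path $s_0s_1\ldots$, the accumulated reward is $\sum_{k=0}^{n-1}\mathrm{rew}(s_k)$ with $n=\min\{i\mid s_i\in T\}$ if $T$ is visited, and $\infty$ otherwise; $\mathbb{E}^\sigma_s(\Diamond T)$ is its expectation under $\sigma$ from $s$, $\mathbb{E}^{\mathrm{opt}}_s(\Diamond T)=\mathrm{opt}_\sigma\mathbb{E}^\sigma_s(\Diamond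 T)$. $E^{\mathrm{opt}}(x)(s)=0$ for $s\in T$ and $\mathrm{rew}(s)+\mathrm{opt}_{a\in\mathrm{Act}(s)}\sum_{s'\in\mathrm{Post}(s,a)}P(s,a,s')x(s')$ for $s\notin T$, with $p\cdot\infty=\infty$ for $p>0$, $a+\infty=\infty$. $\mathbb{N}_\infty=\mathbb{N}\cup\{\infty\}$. For $\mathrm{opt}'\in\{\min,\max\}$, the complementary distance operator is $\tilde D^{\mathrm{opt}'}(r)(s)=\infty$ for $s\in T$ and $\mathrm{opt}'_{a\in\mathrm{Act}(s)}\big(\min_{s'\in\mathrm{Post}(s,a)}r(s')+[\exists u,v\in\mathrm{Post}(s,a)\colon r(u)\ne r(v)]\big)$ for $s\notin T$, where $[\varphi]\in\{0,1\}$ is the Iverson bracket and $\infty+1=\infty$. *)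

(* Defs.v *)
From HB Require Import structures.
From mathcomp Require Import all_boot all_order all_algebra.
From mathcomp Require Import all_classical all_reals all_analysis.

Set Implicit Arguments.
Unset Strict Implicit.
Unset Printing Implicit Defensive.

Import Order.TTheory GRing.Theory Num.Theory.
Local Open Scope ring_scope.

Inductive opt_kind := OptMin | OptMax.
Definition opt_dual (o : opt_kind) : opt_kind :=
  match o with OptMin => OptMax | OptMax => OptMin end.

(* N_oo = N u {oo}, with None standing for oo *)
Definition natinf := option nat.
Definition ni_le (a b : natinf) : bool :=
  match a, b with
  | _, None => true
  | None, Some _ => false
  | Some m, Some n => (m <= n)%N
  end.
Definition ni_min (a b : natinf) : natinf :=
  match a, b with
  | None, b => b
  | a, None => a
  | Some m, Some n => Some (minn m n)
  end.
Definition ni_max (a b : natinf) : natinf :=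
  match a, b with
  | None, _ => None
  | _, None => None
  | Some m, Some n => Some (maxn m n)
  end.
Definition ni_addn (a : natinf) (k : nat) : natinf := omap (fun m => (m + k)%N) a.

Section MDPDefs.
Variables (R : realType) (S Act : finType).
Variable P : S -> Act -> S -> R.

Definition is_MDP : Prop :=
  [/\ (forall s a s', 0 <= P s a s' <= 1),
      (forall s a, \sum_(s' : S) P s a s' = 0 \/ \sum_(s' : S) P s a s' = 1) &
      (forall s, exists a, \sum_(s' : S) P s a s' = 1)].

Definition enabled (s : S) (a : Act) : bool := \sum_(s' : S) P s a s' == 1.
Definition post (s : S) (a : Act) (s' : S) : bool := 0 < P s a s'.

Definition strategy (sigma : {ffun S -> Act}) : bool :=
  [forall s, enabled s (sigma s)].

Variable T : {set S}.
Variable rew : S -> R.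

(* finite paths of length n (n transitions) are functions 'I_n.+1 -> S *)
Definition prev_st n (p : {ffun 'I_n.+1 -> S}) (i : 'I_n) : S :=
  p (widen_ord (leqnSn n) i).
Definition next_st n (p : {ffun 'I_n.+1 -> S}) (i : 'I_n) : S :=
  p (lift ord0 i).

Definition first_hit (s : S) n (p : {ffun 'I_n.+1 -> S}) : bool :=
  [&& p ord0 == s, p ord_max \in T & [forall i : 'I_n, prev_st p i \notin T]].

Definition path_prob (sigma : {ffun S -> Act}) n (p : {ffun 'I_n.+1 -> S}) : R :=
  \prod_(i < n) P (prev_st p i) (sigma (prev_st p i)) (next_st p i).

Definition path_rew n (p : {ffun 'I_n.+1 -> S}) : R :=
  \sum_(i < n) rew (prev_st p i).

Local Open Scope ereal_scope.

(* Pr^sigma_s(<> T): the event <>T is the disjoint union of the cylinders of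
   the first-hitting paths *)
Definition prob_reach (sigma : {ffun S -> Act}) (s : S) : \bar R :=
  \sum_(n <oo) \sum_(p : {ffun 'I_n.+1 -> S} | first_hit s p) (path_prob sigma p)%:E.

(* E^sigma_s(<> T): expectation of the accumulated reward, which is oo on the
   paths never visiting T; hence it is oo as soon as Pr(<>T) < 1, and otherwise
   it is the sum over the (countably many, disjoint) first-hitting cylinders. *)
Definition exp_rew (sigma : {ffun S -> Act}) (s : S) : \bar R :=
  if prob_reach sigma s == 1 then
    \sum_(n <oo) \sum_(p : {ffun 'I_n.+1 -> S} | first_hit s p)
        ((path_prob sigma p) * (path_rew p))%:E
  else +oo.

Definition exp_rew_opt (o : opt_kind) (s : S) : \bar R :=
  match o with
  | OptMin => \big[mine/+oo]_(sigma | strategy sigma) exp_rew sigma s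
  | OptMax => \big[maxe/-oo]_(sigma | strategy sigma) exp_rew sigma s
  end.

(* the Bellman operator E^opt; note (p%:E * +oo) = +oo for p > 0 *)
Definition bellman_val (x : S -> \bar R) (s : S) (a : Act) : \bar R :=
  \sum_(s' | post s a s') (P s a s')%:E * x s'.

Definition E_op (o : opt_kind) (x : S -> \bar R) (s : S) : \bar R :=
  if s \in T then 0 else
  (rew s)%:E +
  match o with
  | OptMin => \big[mine/+oo]_(a | enabled s a) bellman_val x s a
  | OptMax => \big[maxe/-oo]_(a | enabled s a) bellman_val x s a
  end.

Local Close Scope ereal_scope.

Definition Dt_val (r : S -> natinf) (s : S) (a : Act) : natinf :=
  ni_addn (\big[ni_min/None]_(s' | post s a s') r s')
          [exists u, exists v, [&& post s a u, post s a v & r u != r v]].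

Definition Dtilde (o : opt_kind) (r : S -> natinf) (s : S) : natinf :=
  if s \in T then None else
  match o with
  | OptMin => \big[ni_min/None]_(a | enabled s a) Dt_val r s a
  | OptMax => \big[ni_max/Some 0%N]_(a | enabled s a) Dt_val r s a
  end.

End MDPDefs.

(* Main.v *)
Require Import Defs.
From HB Require Import structures.
From mathcomp Require Import all_boot all_order all_algebra.
From mathcomp Require Import all_classical all_reals all_analysis.
From mathcomp Require Import ring lra zify.
Import Order.TTheory GRing.Theory Num.Theory.
Local Open Scope ring_scope.

Set Implicit Arguments.
Unset Strict Implicit.
Unset Printing Implicit Defensive.

Section Paths.
Variables (R : realType) (S Act : finType).
Variable P : S -> Act -> S -> R.
Variable T : {set S}.
Variable rew : S -> R.
Variable sigma : {ffun S -> Act}.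

Definition pcons n (a : S) (q : {ffun 'I_n.+1 -> S}) : {ffun 'I_n.+2 -> S} :=
  [ffun i => if unlift ord0 i is Some j then q j else a].
Definition ptail n (p : {ffun 'I_n.+2 -> S}) : {ffun 'I_n.+1 -> S} :=
  [ffun j => p (lift ord0 j)].

Lemma pcons0 n a (q : {ffun 'I_n.+1 -> S}) : pcons a q ord0 = a.
Proof. by rewrite /pcons ffunE unlift_none. Qed.
Lemma pconsS n a (q : {ffun 'I_n.+1 -> S}) j : pcons a q (lift ord0 j) = q j.
Proof. by rewrite /pcons ffunE liftK. Qed.

Lemma pconsK n : cancel (fun j : S * {ffun 'I_n.+1 -> S} => pcons j.1 j.2)
  (fun p : {ffun 'I_n.+2 -> S} => (p ord0, ptail p)).
Proof.
move=> [a q] /=; rewrite pcons0; congr pair; apply/ffunP => j.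
by rewrite /ptail ffunE pconsS.
Qed.
Lemma ptailK n : cancel (fun p : {ffun 'I_n.+2 -> S} => (p ord0, ptail p))
  (fun j : S * {ffun 'I_n.+1 -> S} => pcons j.1 j.2).
Proof.
move=> p /=; apply/ffunP => i; rewrite /pcons ffunE.
by case: unliftP => [j ->|->]; rewrite ?ffunE.
Qed.

Lemma forall_ordS n (F : 'I_n.+1 -> bool) :
  [forall i, F i] = F ord0 && [forall j : 'I_n, F (lift ord0 j)].
Proof.
apply/forallP/andP => [H|[H0 /forallP H]]; first by split=> //; apply/forallP.
by move=> i; case: (unliftP ord0 i) => [j ->|->].
Qed.

Lemma widen_lift0 n (j : 'I_n) :
  widen_ord (leqnSn n.+1) (lift ord0 j) = lift ord0 (widen_ord (leqnSn n) j).
Proof. by apply: val_inj. Qed.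

Lemma first_hit_pcons n s a (q : {ffun 'I_n.+1 -> S}) :
  first_hit T s (pcons a q) = [&& a == s, a \notin T & first_hit T (q ord0) q].
Proof.
rewrite /first_hit pcons0 eqxx /= forall_ordS.
have -> : (ord_max : 'I_n.+2) = lift ord0 ord_max by apply: val_inj.
rewrite pconsS /prev_st.
have -> : widen_ord (leqnSn n.+1) ord0 = ord0 by apply: val_inj.
rewrite pcons0.
have -> : [forall j : 'I_n, pcons a q (widen_ord (leqnSn n.+1) (lift ord0 j)) \notin T]
   = [forall j : 'I_n, q (widen_ord (leqnSn n) j) \notin T].
  by apply: eq_forallb => j; rewrite widen_lift0 pconsS.
by case: (a == s); case: (a \in T); case: (q ord_max \in T).
Qed.

Lemma path_prob_pcons n a (q : {ffun 'I_n.+1 -> S}) :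
  path_prob P sigma (pcons a q) = P a (sigma a) (q ord0) * path_prob P sigma q.
Proof.
rewrite /path_prob big_ord_recl /prev_st /next_st.
have -> : widen_ord (leqnSn n.+1) ord0 = ord0 by apply: val_inj.
rewrite pcons0 pconsS; congr (_ * _); apply: eq_bigr => i _.
by rewrite widen_lift0 !pconsS.
Qed.

Lemma path_rew_pcons n a (q : {ffun 'I_n.+1 -> S}) :
  path_rew rew (pcons a q) = rew a + path_rew rew q.
Proof.
rewrite /path_rew big_ord_recl /prev_st.
have -> : widen_ord (leqnSn n.+1) ord0 = ord0 by apply: val_inj.
rewrite pcons0; congr (_ + _); apply: eq_bigr => i _.
by rewrite widen_lift0 !pconsS.
Qed.

Lemma sum_first_hitS n s (G : {ffun 'I_n.+2 -> S} -> R) :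
  \sum_(p | first_hit T s p) G p =
  if s \in T then 0 else
  \sum_v \sum_(q : {ffun 'I_n.+1 -> S} | first_hit T v q) G (pcons s q).
Proof.
rewrite (reindex (fun j : S * {ffun 'I_n.+1 -> S} => pcons j.1 j.2)); last first.
  by apply: onW_bij; exists (fun p : {ffun 'I_n.+2 -> S} => (p ord0, ptail p)); [apply: pconsK|apply: ptailK].
under eq_bigl do rewrite first_hit_pcons.
case: ifPn => sT.
  by rewrite big_pred0 // => -[a q] /=; case: eqP => // ->; rewrite sT.
rewrite -(pair_big_dep (fun a => a == s) (fun a (q : {ffun 'I_n.+1 -> S}) => (a \notin T) && first_hit T (q ord0) q)
   (fun a q => G (pcons a q))) /=.
rewrite (big_pred1 s) //=; rewrite sT /=.
rewrite (partition_big (fun q : {ffun 'I_n.+1 -> S} => q ord0) predT (fun _ _ => isT)) /=.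
apply: eq_bigr => v _; apply: eq_bigl => q.
case: (eqVneq (q ord0) v) => [<-|ne]; first by rewrite andbT.
by rewrite andbF /first_hit (negbTE ne).
Qed.


Lemma sum_first_hit0 s (G : {ffun 'I_1 -> S} -> R) :
  \sum_(p | first_hit T s p) G p = if s \in T then G [ffun => s] else 0.
Proof.
have E : forall p : {ffun 'I_1 -> S}, first_hit T s p = (p == [ffun => s]) && (s \in T).
  move=> p; rewrite /first_hit.
  have -> : (ord_max : 'I_1) = ord0 by apply: val_inj.
  have -> : [forall i : 'I_0, prev_st p i \notin T] by apply/forallP => -[].
  rewrite andbT; case: (eqVneq (p ord0) s) => [<-|ne] /=.
    suff -> : p == [ffun => p ord0] by [].
    by apply/eqP/ffunP => i; rewrite ffunE (ord1 i).
  apply/esym/negbTE; apply: contra ne => /andP[/eqP -> _]; by rewrite ffunE.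
under eq_bigl do rewrite E.
case: ifPn => sT.
  by under eq_bigl do rewrite andbT; rewrite big_pred1_eq.
by rewrite big_pred0 // => p; rewrite andbF.
Qed.

Definition Hn n s := \sum_(p : {ffun 'I_n.+1 -> S} | first_hit T s p) path_prob P sigma p.
Definition Kn n s := \sum_(p : {ffun 'I_n.+1 -> S} | first_hit T s p)
   path_prob P sigma p * path_rew rew p.
Definition Q u v := P u (sigma u) v.

Lemma Hn0 s : Hn 0 s = (s \in T)%:R.
Proof. by rewrite /Hn sum_first_hit0 /path_prob big_ord0; case: (s \in T). Qed.
Lemma Kn0 s : Kn 0 s = 0.
Proof. by rewrite /Kn sum_first_hit0 /path_rew big_ord0 mulr0; case: (s \in T). Qed.
Lemma HnS n s : Hn n.+1 s = if s \in T then 0 else \sum_v Q s v * Hn n v.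
Proof.
rewrite /Hn sum_first_hitS; case: ifP => // _.
apply: eq_bigr => v _; rewrite mulr_sumr; apply: eq_bigr => q /andP[/eqP <- _].
by rewrite path_prob_pcons.
Qed.
Lemma KnS n s : Kn n.+1 s =
  if s \in T then 0 else \sum_v Q s v * (rew s * Hn n v + Kn n v).
Proof.
rewrite /Kn sum_first_hitS; case: ifP => // _.
apply: eq_bigr => v _; rewrite /Hn mulr_sumr -big_split mulr_sumr /=.
apply: eq_bigr => q /andP[/eqP <- _].
rewrite path_prob_pcons path_rew_pcons /Q; lra.
Qed.
End Paths.

Lemma ni_le_trans a b c : ni_le a b -> ni_le b c -> ni_le a c.
Proof. case: a b c => [a|] [b|] [c|] //=; exact: leq_trans. Qed.
Lemma ni_min_le_l a b : ni_le (ni_min a b) a.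
Proof. case: a b => [a|] [b|] //=; by rewrite ?geq_minl ?leqnn. Qed.
Lemma ni_min_le_r a b : ni_le (ni_min a b) b.
Proof. case: a b => [a|] [b|] //=; by rewrite ?geq_minr ?leqnn. Qed.
Lemma ni_max_le a b c : ni_le (ni_max a b) c -> ni_le a c /\ ni_le b c.
Proof. case: a b c => [a|] [b|] [c|] //=; by rewrite geq_max => /andP. Qed.

Lemma big_ni_min_le (I : eqType) (l : seq I) (Pr : pred I) (F : I -> natinf) w :
  w \in l -> Pr w -> ni_le (\big[ni_min/None]_(i <- l | Pr i) F i) (F w).
Proof.
elim: l => // a l IH; rewrite inE big_cons => /orP[/eqP <-|wl] Pw.
  by rewrite Pw ni_min_le_l.
case: ifP => _; last exact: IH.
exact: ni_le_trans (ni_min_le_r _ _) (IH wl Pw).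
Qed.

Lemma big_ni_max_le (I : eqType) (l : seq I) (Pr : pred I) (F : I -> natinf) w c :
  ni_le (\big[ni_max/Some 0%N]_(i <- l | Pr i) F i) c -> w \in l -> Pr w ->
  ni_le (F w) c.
Proof.
elim: l => // a l IH; rewrite big_cons inE => Hb /orP[/eqP ->|wl] Pw.
  by move: Hb; rewrite Pw => /ni_max_le[].
case: ifP Hb => _ Hb; last exact: IH.
by case/ni_max_le: Hb => _ Hb; exact: IH.
Qed.

Lemma big_attained (X I : Type) (op : X -> X -> X) idx (l : seq I) (Pr : pred I) F :
  (forall a b, op a b = a \/ op a b = b) ->
  \big[op/idx]_(i <- l | Pr i) F i = idx \/
  exists i, Pr i /\ F i = \big[op/idx]_(i <- l | Pr i) F i.
Proof.
move=> hop.
apply: (big_ind (fun v => v = idx \/ exists i, Pr i /\ F i = v)); first by left.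
  move=> x y Hx Hy; case: (hop x y) => ->; by [].
by move=> i Pi; right; exists i.
Qed.

Lemma ni_min_op a b : ni_min a b = a \/ ni_min a b = b.
Proof.
case: a b => [a|] [b|] /=; try by [left|right].
by rewrite /minn; case: ifP; [left|right].
Qed.

Lemma bigmin_le_term d (X : orderType d) (I : eqType) (l : seq I) (Pr : pred I)
  (F : I -> X) idx w : w \in l -> Pr w ->
  (\big[Order.min/idx]_(i <- l | Pr i) F i <= F w)%O.
Proof.
elim: l => // a l IH; rewrite inE big_cons => /orP[/eqP <-|wl] Pw.
  by rewrite Pw ge_min lexx.
case: ifP => _; last exact: IH.
by rewrite ge_min IH ?orbT.
Qed.

Lemma bigmax_ge_term d (X : orderType d) (I : eqType) (l : seq I) (Pr : pred I)
  (F : I -> X) idx w : w \in l -> Pr w ->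
  (F w <= \big[Order.max/idx]_(i <- l | Pr i) F i)%O.
Proof.
elim: l => // a l IH; rewrite inE big_cons => /orP[/eqP <-|wl] Pw.
  by rewrite Pw le_max lexx.
case: ifP => _; last exact: IH.
by rewrite le_max IH ?orbT.
Qed.

Section Series.
Variables (R : realType) (S Act : finType).
Variable P : S -> Act -> S -> R.
Variable T : {set S}.
Variable rew : S -> R.
Variable sigma : {ffun S -> Act}.
Hypothesis HP : forall u a v, 0 <= P u a v <= 1.
Hypothesis Hsig : forall u, \sum_v P u (sigma u) v = 1.
Hypothesis Hrew : forall s, 0 <= rew s.

Local Notation H := (Hn P T sigma).
Local Notation K := (Kn P T rew sigma).
Local Notation Q := (Q P sigma).

Lemma Q_ge0 u v : 0 <= Q u v.
Proof. by case/andP: (HP u (sigma u) v). Qed.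

Lemma Hn_ge0 n s : 0 <= H n s.
Proof.
elim: n s => [|n IH] s; first by rewrite Hn0; case: (s \in T).
rewrite HnS; case: ifP => // _; apply: sumr_ge0 => v _.
by apply: mulr_ge0; [apply: Q_ge0|apply: IH].
Qed.

Lemma Kn_ge0 n s : 0 <= K n s.
Proof.
elim: n s => [|n IH] s; first by rewrite Kn0.
rewrite KnS; case: ifP => // _; apply: sumr_ge0 => v _.
apply: mulr_ge0; first exact: Q_ge0.
by apply: addr_ge0 => //; apply: mulr_ge0 => //; apply: Hn_ge0.
Qed.

Local Open Scope ereal_scope.

Definition Fp s := \sum_(n <oo) (H n s)%:E.
Definition Ep s := \sum_(n <oo) (K n s)%:E.

Lemma prob_reachE s : prob_reach P T sigma s = Fp s.
Proof. by apply: eq_eseriesr => n _; rewrite sumEFin. Qed.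

Lemma exp_rewE s : exp_rew P T rew sigma s = if Fp s == 1 then Ep s else +oo.
Proof.
rewrite /exp_rew prob_reachE; case: ifP => // _.
by apply: eq_eseriesr => n _; rewrite sumEFin.
Qed.

Lemma Fp_ge0 s : 0 <= Fp s.
Proof. by apply: nneseries_ge0 => n _ _; rewrite lee_fin Hn_ge0. Qed.
Lemma Ep_ge0 s : 0 <= Ep s.
Proof. by apply: nneseries_ge0 => n _ _; rewrite lee_fin Kn_ge0. Qed.

Lemma Fp_T s : s \in T -> Fp s = 1.
Proof.
move=> sT; rewrite /Fp nneseries_recl // ?Hn0 ?sT; last by move=> k _; rewrite lee_fin Hn_ge0.
rewrite eseries0 ?adde0 // => -[|i] //= _ _; by rewrite HnS sT.
Qed.

Lemma Ep_T s : s \in T -> Ep s = 0.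
Proof.
move=> sT; rewrite /Ep eseries0 // => -[|i] _ _; by rewrite ?Kn0 ?KnS ?sT.
Qed.

Lemma series_shift (f : nat -> \bar R) : (forall n, 0 <= f n) ->
  \sum_(n <oo) f n = f 0%N + \sum_(n <oo) f n.+1.
Proof.
move=> f0; rewrite nneseries_recl // -(nneseries_addn 1) //.
by under eq_eseriesr do rewrite addn1.
Qed.

Lemma Fp_S s : s \notin T -> Fp s = \sum_v (Q s v)%:E * Fp v.
Proof.
move=> sT; rewrite /Fp series_shift; last by move=> n; rewrite lee_fin Hn_ge0.
rewrite Hn0 (negbTE sT) add0e.
under eq_eseriesr do rewrite HnS (negbTE sT) -sumEFin.
rewrite nneseries_sum; last by move=> v j _; rewrite lee_fin mulr_ge0 ?Q_ge0 ?Hn_ge0.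
apply: eq_bigr => v _; under eq_eseriesr do rewrite EFinM.
by rewrite nneseriesZl // => n _; rewrite lee_fin Hn_ge0.
Qed.

Lemma Ep_S s : s \notin T ->
  Ep s = \sum_v (Q s v)%:E * ((rew s)%:E * Fp v + Ep v).
Proof.
move=> sT; rewrite /Ep series_shift; last by move=> n; rewrite lee_fin Kn_ge0.
rewrite Kn0 add0e.
under eq_eseriesr do rewrite KnS (negbTE sT) -sumEFin.
rewrite nneseries_sum; last first.
  by move=> v j _; rewrite lee_fin mulr_ge0 ?Q_ge0 ?addr_ge0 ?mulr_ge0 ?Hn_ge0 ?Kn_ge0.
apply: eq_bigr => v _; under eq_eseriesr do rewrite EFinM EFinD EFinM.
rewrite nneseriesZl //; last first.
  by move=> n _; rewrite lee_fin addr_ge0 ?mulr_ge0 ?Hn_ge0 ?Kn_ge0.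
rewrite nneseriesD //; last 2 first.
- by move=> n _ _; rewrite lee_fin mulr_ge0 ?Hn_ge0.
- by move=> n _ _; rewrite lee_fin Kn_ge0.
by rewrite nneseriesZl // => n _; rewrite lee_fin Hn_ge0.
Qed.

Lemma Hpart N s : (\sum_(0 <= n < N) H n s <= 1)%R.
Proof.
elim: N s => [|N IH] s; first by rewrite big_geq.
rewrite big_nat_recl // Hn0.
case: (boolP (s \in T)) => sT.
  by rewrite big1 ?addr0 // => n _; rewrite HnS sT.
rewrite add0r.
under eq_bigr do rewrite HnS (negbTE sT).
rewrite exchange_big /=.
apply: (@le_trans _ _ (\sum_v Q s v)%R); last by rewrite Hsig.
apply: ler_sum => v _; rewrite -mulr_sumr.
by apply: ler_piMr; [apply: Q_ge0|apply: IH].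
Qed.

Lemma Fp_le1 s : Fp s <= 1.
Proof.
apply: lime_le; first by apply: is_cvg_nneseries => n _ _; rewrite lee_fin Hn_ge0.
by apply: nearW => N; rewrite sumEFin lee_fin Hpart.
Qed.


Local Close Scope ereal_scope.

Lemma Qnpost u v : ~~ post P u (sigma u) v -> Q u v = 0.
Proof.
move=> npv; have := Q_ge0 u v; rewrite le_eqVlt => /orP[/eqP <-//|].
by move=> h; rewrite /post in npv; rewrite h in npv.
Qed.

Lemma Qpost1 u : \sum_(v | post P u (sigma u) v) Q u v = 1.
Proof.
rewrite -(Hsig u) [in RHS](bigID (post P u (sigma u))) /=.
by rewrite [X in _ = _ + X]big1 ?addr0 // => v /Qnpost.
Qed.

Local Open Scope ereal_scope.

Lemma Fp_fin v : Fp v = (fine (Fp v))%:E.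
Proof.
rewrite fineK // ge0_fin_numE ?Fp_ge0 //.
exact: le_lt_trans (Fp_le1 v) (ltry _).
Qed.

Lemma Fp_succ s v : s \notin T -> Fp s = 1 -> post P s (sigma s) v -> Fp v = 1.
Proof.
move=> sT F1 pv.
pose f w := fine (Fp w).
have Hf w : Fp w = (f w)%:E := Fp_fin w.
have f01 w : (0 <= f w <= 1)%R.
  by rewrite -!lee_fin -Hf Fp_ge0 ?Fp_le1.
have Hs : (\sum_w Q s w * f w)%R = 1%R.
  move: F1; rewrite Fp_S //.
  under eq_bigr do rewrite Hf -EFinM.
  by rewrite sumEFin => -[].
have H0 : (\sum_w Q s w * (1 - f w))%R = 0%R.
  rewrite (eq_bigr (fun w => Q s w - Q s w * f w)%R); last by move=> w _; rewrite mulrBr mulr1.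
  by rewrite sumrB Hsig Hs subrr.
have Hnn : forall w, predT w -> (0 <= Q s w * (1 - f w))%R.
  move=> w _; apply: mulr_ge0; first exact: Q_ge0.
  by rewrite subr_ge0; case/andP: (f01 w).
have := psumr_eq0P Hnn H0 (i := v) isT.
move/eqP; rewrite mulf_eq0 => /orP[/eqP Q0|].
  by move: pv; rewrite /post -[P s (sigma s) v]/(Q s v) Q0 ltxx.
by rewrite subr_eq0 => /eqP f1; rewrite Hf -f1.
Qed.

Lemma Ep_succ s v : s \notin T -> Ep s < +oo -> post P s (sigma s) v -> Ep v < +oo.
Proof.
move=> sT Es pv; rewrite ltNge leye_eq; apply/negP => /eqP Ev.
move: Es; rewrite Ep_S // (bigD1 v) //= Ev addey; last first.
  by rewrite gt_eqF // (lt_le_trans (ltNyr 0%R)) // mule_ge0 ?lee_fin ?Fp_ge0.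
rewrite mulry gtr0_sg // mul1e addye ?ltxx //.
rewrite gt_eqF // (lt_le_trans (ltNyr 0%R)) // sume_ge0 // => w _.
by rewrite mule_ge0 ?lee_fin ?Q_ge0 // adde_ge0 ?mule_ge0 ?lee_fin ?Fp_ge0 ?Ep_ge0.
Qed.

Lemma Ep_fin v : Ep v < +oo -> Ep v = (fine (Ep v))%:E.
Proof. by move=> h; rewrite fineK // ge0_fin_numE ?Ep_ge0. Qed.

Lemma Ep_real s : s \notin T -> Fp s = 1 -> Ep s < +oo ->
  fine (Ep s) = (rew s + \sum_(v | post P s (sigma s) v) Q s v * fine (Ep v))%R.
Proof.
move=> sT F1 E1; have := Ep_S sT.
rewrite (bigID (post P s (sigma s))) /= [X in _ + X]big1 ?adde0; last first.
  by move=> v /Qnpost ->; rewrite mul0e.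
under eq_bigr => v pv.
  rewrite (Fp_succ sT F1 pv) mule1 (Ep_fin (Ep_succ sT E1 pv)) -EFinD -EFinM.
  over.
rewrite sumEFin => ->; rewrite /=.
under eq_bigr do rewrite mulrDr.
by rewrite big_split /= -mulr_suml Qpost1 mul1r.
Qed.

Lemma Z_closed (A : S -> bool) :
  (forall v, A v -> v \notin T) ->
  (forall v w, A v -> post P v (sigma v) w -> A w) ->
  forall v, A v -> Fp v = 0.
Proof.
move=> hAT hAcl.
have Hz n w : A w -> Hn P T sigma n w = 0%R.
  elim: n w => [|n IH] w Aw; first by rewrite Hn0 (negbTE (hAT w Aw)).
  rewrite HnS (negbTE (hAT w Aw)) big1 // => u _.
  case: (boolP (post P w (sigma w) u)) => pu.
    by rewrite IH ?mulr0 //; apply: hAcl pu.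
  by rewrite Qnpost // mul0r.
by move=> v Av; rewrite /Fp eseries0 // => n _ _; rewrite Hz.
Qed.

Variables (x : S -> \bar R) (r : S -> natinf).
Hypothesis Hx0 : forall s, 0 <= x s.
Hypothesis HxT : forall s, s \in T -> x s <= 0.
Hypothesis Hbell : forall s, s \notin T -> r s = None ->
  x s <= (rew s)%:E + bellman_val P x s (sigma s).
Hypothesis Hxinf : forall s, x s = +oo -> r s <> None.
Hypothesis HrT : forall s, s \in T -> r s = None.
Hypothesis HrD : forall s, r s <> None -> ni_le (Dt_val P r s (sigma s)) (r s).

Lemma L1 s : r s <> None -> Fp s != 1.
Proof.
move=> rs0; apply/negP => /eqP F0.
pose U v := (r v != None) && (Fp v == 1).
pose rn v := odflt 0%N (r v).
have U0 : U s by rewrite /U F0 eqxx andbT; apply/eqP.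
case: (arg_minnP rn U0) => m Um Hmin.
pose A v := U v && (rn v == rn m).
have AT v : A v -> v \notin T.
  by case/andP=> /andP[rv _] _; apply/negP => vT; rewrite HrT in rv.
have Acl v w : A v -> post P v (sigma v) w -> A w.
  move=> Av pw; have vT := AT v Av.
  case/andP: Av => /andP[rv /eqP Fv] /eqP rnv.
  have Fsucc u : post P v (sigma v) u -> Fp u = 1 := fun pu => Fp_succ vT Fv pu.
  have rvk : r v = Some (rn m) by move: rv rnv; rewrite /rn; case: (r v) => // k _ /= ->.
  have : ni_le (Dt_val P r v (sigma v)) (Some (rn m)) by rewrite -rvk; apply: HrD; rewrite rvk.
  rewrite /Dt_val.
  have [mnN|[s2 [ps2 rs2]]] := @big_attained _ _ ni_min None (index_enum S)
     (post P v (sigma v)) r ni_min_op.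
    by rewrite mnN.
  rewrite -rs2.
  case rs2e : (r s2) => [m2|] //= Hle.
  have Us2 : U s2 by rewrite /U rs2e /= Fsucc.
  have := Hmin s2 Us2; rewrite {2}/rn rs2e /= => hm.
  set b := [exists u, _] in Hle.
  have bF : b = false by move: Hle hm; case: b => /=; lia.
  have m2e : m2 = rn m by move: Hle hm; rewrite bF /=; lia.
  have rw : r w = r s2.
    apply/eqP; apply: contraFT bF => ne; apply/existsP; exists w; apply/existsP; exists s2.
    by rewrite pw ps2 ne.
  by rewrite /A /U rw rs2e /= Fsucc // eqxx /rn rw rs2e /= m2e.
have := Z_closed AT Acl (v := m); rewrite /A Um eqxx => /(_ isT) Fm.
move: Um; rewrite /U Fm => /andP[_ /eqP h]; by have := @lte01 R; rewrite h ltxx.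
Qed.

Theorem core s : x s <= exp_rew P T rew sigma s.
Proof.
rewrite exp_rewE; case: ifPn => [/eqP F0|]; last by rewrite leey.
case: (boolP (Ep s < +oo)) => [E0|]; last first.
  by rewrite -leNgt leye_eq => /eqP ->; rewrite leey.
pose Reg v := (Fp v == 1) && (Ep v < +oo).
have RegN v : Reg v -> r v = None.
  case/andP=> /eqP Fv _; case E : (r v) => [k|] //.
  have nn : r v <> None by rewrite E.
  by have := L1 nn; rewrite Fv eqxx.
have Regx v : Reg v -> x v = (fine (x v))%:E.
  move=> Rv; rewrite fineK // ge0_fin_numE // ltey; apply/eqP => /Hxinf.
  by rewrite RegN.
have Regcl v w : Reg v -> v \notin T -> post P v (sigma v) w -> Reg w.
  case/andP=> /eqP Fv Ev vT pw.
  by rewrite /Reg (Fp_succ vT Fv pw) eqxx (Ep_succ vT Ev pw).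
pose d v := (fine (x v) - fine (Ep v))%R.
have dT v : Reg v -> v \in T -> (d v <= 0)%R.
  move=> Rv vT; rewrite /d Ep_T // /= subr0 -lee_fin -Regx //; exact: HxT.
have dS v : Reg v -> v \notin T ->
    (d v <= \sum_(w | post P v (sigma v) w) Q v w * d w)%R.
  move=> Rv vT.
  have Hx := Hbell vT (RegN v Rv).
  have Hb : bellman_val P x v (sigma v) =
      (\sum_(w | post P v (sigma v) w) Q v w * fine (x w))%:E.
    rewrite /bellman_val -sumEFin; apply: eq_bigr => w pw.
    by rewrite {1}(Regx w (Regcl v w Rv vT pw)) EFinM.
  rewrite Hb -EFinD Regx // lee_fin in Hx.
  case/andP: Rv => /eqP Fv Ev.
  rewrite /d Ep_real //.
  under [X in (_ <= X)%R]eq_bigr do rewrite mulrBr.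
  rewrite sumrB.
  have : (fine (x v) <= rew v + \sum_(w | post P v (sigma v) w) Q v w * fine (x w))%R
    by exact: Hx.
  lra.
have Rs : Reg s by rewrite /Reg F0 eqxx E0.
suff : (d s <= 0)%R.
  by rewrite /d subr_le0 -lee_fin -Regx // -Ep_fin.
rewrite leNgt; apply/negP => ds.
case: (Order.TotalTheory.arg_maxP d Rs) => m Rm Hmax.
have dm : (0 < d m)%R by apply: lt_le_trans ds (Hmax s Rs).
pose A v := Reg v && (d v == d m).
have AT v : A v -> v \notin T.
  case/andP=> Rv /eqP dv; apply/negP => vT.
  by have := dT v Rv vT; rewrite dv leNgt dm.
have Acl v w : A v -> post P v (sigma v) w -> A w.
  move=> Av pw; have vT := AT v Av; case/andP: Av => Rv /eqP dv.
  have Rw := Regcl v w Rv vT pw.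
  rewrite /A Rw /=.
  have H1 := dS v Rv vT.
  have Hnn : forall u, post P v (sigma v) u -> (0 <= Q v u * (d m - d u))%R.
    move=> u pu; apply: mulr_ge0; first exact: Q_ge0.
    by rewrite subr_ge0; apply: Hmax; apply: Regcl pu.
  have H2 : (\sum_(u | post P v (sigma v) u) Q v u * (d m - d u) = 0)%R.
    apply/eqP; rewrite eq_le; apply/andP; split; last exact: sumr_ge0.
    under eq_bigr do rewrite mulrBr.
    by rewrite sumrB -mulr_suml Qpost1 mul1r subr_le0 -dv.
  have := psumr_eq0P Hnn H2 pw.
  move/eqP; rewrite mulf_eq0 => /orP[/eqP Q0|].
    by move: pw; rewrite /post -[P v (sigma v) w]/(Q v w) Q0 ltxx.
  by rewrite subr_eq0 eq_sym.
have := Z_closed AT Acl (v := m); rewrite /A Rm eqxx => /(_ isT) Fm.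
move: Rm; rewrite /Reg Fm => /andP[/eqP h _]; by have := @lte01 R; rewrite h ltxx.
Qed.

End Series.

Lemma max_op d (X : orderType d) (a b : X) : Order.max a b = a \/ Order.max a b = b.
Proof. by rewrite maxEle; case: ifP; [right|left]. Qed.

Theorem proposition7 (R : realType) (S Act : finType) (P : S -> Act -> S -> R)
  (T : {set S}) (rew : S -> R) (o : opt_kind)
  (x : S -> \bar R) (r : S -> natinf) :
  is_MDP P ->
  (forall s, 0 <= rew s) ->
  (forall s, (0 <= x s)%E) ->
  (forall s, ni_le (Dtilde P T (opt_dual o) r s) (r s)) ->
  (forall s, (x s <= E_op P T rew o x s)%E) ->
  (forall s, x s = +oo%E -> r s <> None) ->
  forall s, (exp_rew_opt P T rew o s >= x s)%E.
Proof.
move=> [HP _ Hen] Hrew Hx0 HD HE Hinf s.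
have HrT u : u \in T -> r u = None.
  by move=> uT; have := HD u; rewrite /Dtilde uT; case: (r u).
have HxT u : u \in T -> (x u <= 0)%E.
  by move=> uT; have := HE u; rewrite /E_op uT.
have rT u : r u <> None -> u \notin T.
  by move=> ru; apply/negP => /HrT.
have Hsig sg : strategy P sg -> forall u, \sum_v P u (sg u) v = 1.
  by move=> /forallP sg1 u; apply/eqP; exact: sg1.
case: o HD HE => HD HE; rewrite /exp_rew_opt.
-
  apply: (big_ind (fun v => (x s <= v)%E)); first exact: leey.
    by move=> a b ha hb; rewrite le_min ha hb.
  move=> sg ssg.
  apply: (core HP (Hsig sg ssg) Hrew Hx0 HxT _ Hinf HrT) => [u uT ru|u ru].
    apply: le_trans (HE u) _; rewrite /E_op (negbTE uT); apply: leeD2l.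
    apply: bigmin_le_term; first exact: mem_index_enum.
    by move/forallP: ssg.
  have := HD u; rewrite /Dtilde (negbTE (rT u ru)) /= => hb.
  apply: (big_ni_max_le hb); first exact: mem_index_enum.
  by move/forallP: ssg.
-
  pose C u a := enabled P u a && (if r u is Some _ then ni_le (Dt_val P r u a) (r u)
     else (\big[maxe/-oo]_(b | enabled P u b) bellman_val P x u b <= bellman_val P x u a)%E).
  have Cex u : exists a, C u a.
    have [a1 ea1] := Hen u.
    have ea1' : enabled P u a1 by apply/eqP.
    rewrite /C; case E : (r u) => [k|].
      have uT : u \notin T by apply: rT; rewrite E.
      have := HD u; rewrite /Dtilde (negbTE uT) /= E.
      have [->|[a [ea <-]]] := @big_attained _ _ ni_min None (index_enum Act)
          (enabled P u) (Dt_val P r u) ni_min_op; first by [].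
      by move=> h; exists a; rewrite ea h.
    have [->|[a [ea <-]]] := @big_attained _ _ maxe -oo%E (index_enum Act)
          (enabled P u) (bellman_val P x u) (@max_op _ _).
      by exists a1; rewrite ea1' leNye.
    by exists a; rewrite ea lexx.
  have [a0 _] := Hen s.
  pose sg := [ffun u => odflt a0 [pick a | C u a]].
  have Csg u : C u (sg u).
    rewrite /sg ffunE; case: pickP => [a Ca //|none].
    by have [a Ca] := Cex u; rewrite none in Ca.
  have ssg : strategy P sg by apply/forallP => u; case/andP: (Csg u).
  apply: le_trans (bigmax_ge_term _ _ (mem_index_enum sg) ssg).
  apply: (core HP (Hsig sg ssg) Hrew Hx0 HxT _ Hinf HrT) => [u uT ru|u ru].
    apply: le_trans (HE u) _; rewrite /E_op (negbTE uT); apply: leeD2l.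
    by case/andP: (Csg u); rewrite ru.
  by case/andP: (Csg u); case: (r u) ru.
Qed.
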